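(* Every reduced $2$-Segal set is equivalent to the simplicial set $\mathrm{ob}\,S^{\square}_\bullet\mathbb{C}$ for some squares category $\mathbb{C}$.
   Context: A squares category is a flat double category (squares uniquely determined by their boundary; we say a boundary ''is a square'') with a distinguished object $O$ initial in the horizontal category (morphisms $\rightarrowtail$) and terminal in the vertical category (morphisms $\twoheadrightarrow$). $\mathrm{ob}\,S^{\square}_n\mathbb{C}$ is the set of families $(A_{jk})_{0\le j\le k\le n}$ of objects with $A_{jj}=O$, horizontal morphisms $A_{jk}\rightarrowtail A_{j,k+1}$ and vertical morphisms $A_{jk}\twoheadrightarrow A_{j+1,k}$ ($j<k$) such that each unit cell with corners $A_{jk},A_{j,k+1},A_{j+1,k},A_{j+1,k+1}$ ($j<k<n$) is a square; for $\theta:[m]\to[n]$ the simplicial operator sends $(A_{jk})$ to $(A_{\theta(j)\theta(k)})$ with the composite morphisms. A $2$-Segal set is a simplicial set $X$ such that for every $n\ge3$ and $0\le i<j\le n$ the square with vertices $X_n$, $X_{\{i,\dots,j\}}$, $X_{\{0,\dots,i,j,\dots,n\}}$, $X_{\{i,j\}}$ (maps induced by the inclusions of these subsets of $[n]$) is a pullback. It is reduced if $X_0$ is a single point. *)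

(* Defs.v *)
From mathcomp Require Import all_boot.
Set Implicit Arguments. Unset Strict Implicit. Unset Printing Implicit Defensive.

(* The simplex category: [n] = 'I_n.+1, morphisms = monotone maps. *)
Definition monotone (m n : nat) (f : 'I_m.+1 -> 'I_n.+1) : Prop :=
  forall i j : 'I_m.+1, (i <= j)%N -> (f i <= f j)%N.

(* A simplicial set: sets X_n with a contravariant action of monotone maps.
   The action is given on all maps but the functor laws (and hence all the
   structure) only concern monotone maps. *)
Record sSet := SSet {
  sX :> nat -> Type;
  sact : forall m n : nat, ('I_m.+1 -> 'I_n.+1) -> sX n -> sX m;
  sact_id : forall n (x : sX n), sact (fun t => t) x = x;
  sact_comp : forall k m n (f : 'I_k.+1 -> 'I_m.+1) (g : 'I_m.+1 -> 'I_n.+1),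
      monotone f -> monotone g ->
      forall x : sX n, sact (fun t => g (f t)) x = sact f (sact g x)
}.
Arguments sact s {m n} f x.

(* {i,...,j} -> [n]   (domain [j - i]) *)
Definition seg_mid (n i j : nat) : 'I_(j - i).+1 -> 'I_n.+1 :=
  fun t => inord (i + t).
(* {0,...,i,j,...,n} -> [n]   (domain [n - (j - i) + 1]) *)
Definition seg_out (n i j : nat) : 'I_(n - (j - i) + 1).+1 -> 'I_n.+1 :=
  fun t => inord (if (t <= i)%N then nat_of_ord t else (t + (j - i) - 1)%N).
(* {i,j} as a subset of {i,...,j} *)
Definition edge_mid (i j : nat) : 'I_2 -> 'I_(j - i).+1 :=
  fun t => inord (t * (j - i)).
(* {i,j} as a subset of {0,...,i,j,...,n} *)
Definition edge_out (n i j : nat) : 'I_2 -> 'I_(n - (j - i) + 1).+1 :=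
  fun t => inord (i + t).
Arguments seg_mid : clear implicits.
Arguments seg_out : clear implicits.
Arguments edge_mid : clear implicits.
Arguments edge_out : clear implicits.

(* The 2-Segal square is a pullback (of sets): the canonical map
   X_n -> X_{i..j} x_{X_{i,j}} X_{0..i,j..n} is bijective. *)
Definition two_segal (X : sSet) : Prop :=
  forall n i j : nat, (3 <= n)%N -> (i < j)%N -> (j <= n)%N ->
    forall (y1 : X (j - i)) (y2 : X (n - (j - i) + 1)),
      sact X (edge_mid i j) y1 = sact X (edge_out n i j) y2 ->
      exists! x : X n, sact X (seg_mid n i j) x = y1 /\ sact X (seg_out n i j) x = y2.

Definition reduced (X : sSet) : Prop := exists x : X 0, forall y : X 0, y = x.

(* A flat double category (single-sorted presentation of the horizontal and
   vertical categories on a common object type; squares are a predicate on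
   boundaries: Sq top bottom left right), with a distinguished object O that is
   initial in the horizontal and terminal in the vertical category.
   hcomp f g / vcomp f g = "f then g". *)
Record squares_category := SquaresCat {
  Ob : Type;
  Hm : Type; hsrc : Hm -> Ob; htgt : Hm -> Ob; hid : Ob -> Hm; hcomp : Hm -> Hm -> Hm;
  Vm : Type; vsrc : Vm -> Ob; vtgt : Vm -> Ob; vid : Ob -> Vm; vcomp : Vm -> Vm -> Vm;
  Sq : Hm -> Hm -> Vm -> Vm -> Prop;
  O : Ob;
  hid_src : forall a, hsrc (hid a) = a;
  hid_tgt : forall a, htgt (hid a) = a;
  hcomp_src : forall f g, htgt f = hsrc g -> hsrc (hcomp f g) = hsrc f;
  hcomp_tgt : forall f g, htgt f = hsrc g -> htgt (hcomp f g) = htgt g;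
  hcomp_idl : forall f, hcomp (hid (hsrc f)) f = f;
  hcomp_idr : forall f, hcomp f (hid (htgt f)) = f;
  hcomp_assoc : forall f g h, htgt f = hsrc g -> htgt g = hsrc h ->
      hcomp (hcomp f g) h = hcomp f (hcomp g h);
  vid_src : forall a, vsrc (vid a) = a;
  vid_tgt : forall a, vtgt (vid a) = a;
  vcomp_src : forall f g, vtgt f = vsrc g -> vsrc (vcomp f g) = vsrc f;
  vcomp_tgt : forall f g, vtgt f = vsrc g -> vtgt (vcomp f g) = vtgt g;
  vcomp_idl : forall f, vcomp (vid (vsrc f)) f = f;
  vcomp_idr : forall f, vcomp f (vid (vtgt f)) = f;
  vcomp_assoc : forall f g h, vtgt f = vsrc g -> vtgt g = vsrc h ->
      vcomp (vcomp f g) h = vcomp f (vcomp g h);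
  Sq_boundary : forall t b l r, Sq t b l r ->
      [/\ hsrc t = vsrc l, htgt t = vsrc r, hsrc b = vtgt l & htgt b = vtgt r];
  Sq_hid : forall v, Sq (hid (vsrc v)) (hid (vtgt v)) v v;
  Sq_vid : forall f, Sq f f (vid (hsrc f)) (vid (htgt f));
  Sq_hcomp : forall t b l r t' b' r', Sq t b l r -> Sq t' b' r r' ->
      Sq (hcomp t t') (hcomp b b') l r';
  Sq_vcomp : forall t m b l r l' r', Sq t m l r -> Sq m b l' r' ->
      Sq t b (vcomp l l') (vcomp r r');
  O_hinitial : forall a, exists f, [/\ hsrc f = O, htgt f = a &
      forall g, hsrc g = O -> htgt g = a -> g = f];
  O_vterminal : forall a, exists v, [/\ vsrc v = a, vtgt v = O &
      forall w, vsrc w = a -> vtgt w = O -> w = v]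
}.

(* Raw data of a family: objects A_{jk}, horizontal maps A_{jk} >-> A_{j,k+1},
   vertical maps A_{jk} ->> A_{j+1,k}; entries outside the index range are
   forced to canonical values by sq_valid, so valid raw data correspond
   bijectively to the families of the paper. *)
Record SqRaw (C : squares_category) := MkSqRaw {
  sobj : nat -> nat -> Ob C;
  shor : nat -> nat -> Hm C;
  sver : nat -> nat -> Vm C
}.

Definition sq_valid (C : squares_category) (n : nat) (A : SqRaw C) : Prop :=
  [/\ ((* A_{jj} = O, and canonical value outside 0 <= j < k <= n *)
      (forall j k, ~~ ((j < k) && (k <= n))%N -> sobj A j k = O C) /\
      (forall j k, ((j <= k) && (k < n))%N ->
         hsrc (shor A j k) = sobj A j k /\ htgt (shor A j k) = sobj A j k.+1)),
      (forall j k, ~~ ((j <= k) && (k < n))%N -> shor A j k = hid (O C)),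
      (forall j k, ((j < k) && (k <= n))%N ->
         vsrc (sver A j k) = sobj A j k /\ vtgt (sver A j k) = sobj A j.+1 k),
      (forall j k, ~~ ((j < k) && (k <= n))%N -> sver A j k = vid (O C))
    &
      (forall j k, ((j < k) && (k < n))%N ->
         Sq (shor A j k) (shor A j.+1 k) (sver A j k) (sver A j k.+1))].

Fixpoint hpath (C : squares_category) (h : nat -> Hm C) (start : Ob C) (b d : nat) : Hm C :=
  match d with
  | 0 => hid start
  | d'.+1 => hcomp (hpath h start b d') (h (b + d')%N)
  end.

Fixpoint vpath (C : squares_category) (v : nat -> Vm C) (start : Ob C) (a d : nat) : Vm C :=
  match d with
  | 0 => vid start
  | d'.+1 => vcomp (vpath v start a d') (v (a + d')%N)
  end.

(* simplicial operator theta : [m] -> [n] (given by its values on 0..m) *)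
Definition sq_act (C : squares_category) (theta : nat -> nat) (m : nat) (A : SqRaw C)
  : SqRaw C :=
  {| sobj := fun j k => if ((j < k) && (k <= m))%N then sobj A (theta j) (theta k) else O C;
     shor := fun j k => if ((j <= k) && (k < m))%N then
               hpath (shor A (theta j)) (sobj A (theta j) (theta k))
                     (theta k) (theta k.+1 - theta k)
             else hid (O C);
     sver := fun j k => if ((j < k) && (k <= m))%N then
               vpath (fun a => sver A a (theta k)) (sobj A (theta j) (theta k))
                     (theta j) (theta j.+1 - theta j)
             else vid (O C) |}.

Definition ord_fun (m n : nat) (f : 'I_m.+1 -> 'I_n.+1) : nat -> nat :=
  fun t => nat_of_ord (f (inord t)).

(* X is isomorphic (as a simplicial set) to ob S^square_. C, via levelwise maps
   phi_n that are injective with image exactly ob S^square_n C and that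
   commute with all simplicial operators. *)
Definition iso_to_SqCat (X : sSet) (C : squares_category) : Prop :=
  exists phi : forall n, X n -> SqRaw C,
    [/\ (forall n, injective (phi n)),
        (forall n (A : SqRaw C), sq_valid n A <-> exists x : X n, phi n x = A)
      & (forall m n (theta : 'I_m.+1 -> 'I_n.+1), monotone theta ->
           forall x : X n, phi m (sact X theta x) = sq_act (ord_fun theta) m (phi n x))].

(* Main.v *)
Require Import Defs.
From mathcomp Require Import all_boot zify.
From Stdlib Require Import FunctionalExtensionality ClassicalEpsilon.
Set Implicit Arguments. Unset Strict Implicit. Unset Printing Implicit Defensive.

Section Faces.
Variable X : sSet.

Definition face (n m : nat) (f : nat -> nat) (x : X n) : X m :=
  sact X (fun t : 'I_m.+1 => (inord (f t) : 'I_n.+1)) x.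

Definition vx (s : seq nat) : nat -> nat := fun t => nth 0 s t.

Definition mono (m k : nat) (f : nat -> nat) : Prop :=
  (forall s t, s <= t -> t <= m -> f s <= f t) /\ f m <= k.

Lemma face_ext n m f g (x : X n) : (forall t, t <= m -> f t = g t) ->
  face m f x = face m g x.
Proof.
move=> H; rewrite /face; congr (sact X _ x).
apply: functional_extensionality => t; by rewrite H // -ltnS.
Qed.

Lemma face_id n (x : X n) : face n (fun t => t) x = x.
Proof.
rewrite /face -[RHS](sact_id x); congr (sact X _ x).
apply: functional_extensionality => t; exact: inord_val.
Qed.

Lemma mono_ord m k f : mono m k f -> monotone (fun t : 'I_m.+1 => (inord (f t) : 'I_k.+1)).
Proof.
move=> [H1 H2] i j Hij.
have Hi : f i <= k by apply: leq_trans (H1 _ _ _ _) H2; rewrite // -ltnS.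
have Hj : f j <= k by apply: leq_trans (H1 _ _ _ _) H2; rewrite // -ltnS.
rewrite !inordK //; apply: H1 => //; by rewrite -ltnS.
Qed.

Lemma face_comp n k m f g (x : X n) : mono m k f -> mono k n g ->
  face m f (face k g x) = face m (fun t => g (f t)) x.
Proof.
move=> Hf Hg; rewrite /face -sact_comp; try exact: mono_ord.
congr (sact X _ x); apply: functional_extensionality => t.
case: Hf => H1 H2.
have Ht : f t <= k by apply: leq_trans (H1 _ _ _ _) H2; rewrite // -ltnS.
by rewrite inordK.
Qed.

Lemma face_compE n k m f g h (x : X n) : mono m k f -> mono k n g ->
  (forall t, t <= m -> g (f t) = h t) ->
  face m f (face k g x) = face m h x.
Proof. move=> Hf Hg H; rewrite face_comp //; exact: face_ext. Qed.

Lemma mono_vx s m k : size s = m.+1 -> sorted leq s -> nth 0 s m <= k -> mono m k (vx s).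
Proof.
move=> Hs Hsrt Hk; split => // a b Hab Hb.
apply: (sorted_leq_nth leq_trans leqnn) => //; rewrite inE Hs ltnS //.
exact: leq_trans Hab Hb.
Qed.

Lemma mono_id m k : m <= k -> mono m k (fun t => t).
Proof. by move=> H; split. Qed.
Lemma mono_shift m k c : m + c <= k -> mono m k (fun t => c + t).
Proof. move=> H; split; [move=> s t Hst _; lia | lia]. Qed.

End Faces.
Arguments face {X n} m f x.

Ltac mono_tac :=
  first [ apply: mono_vx; [reflexivity | rewrite /=; lia | rewrite /=; lia]
        | apply: mono_id; lia
        | apply: mono_shift; lia ].

Ltac ext_tac :=
  let t := fresh "tt" in let Ht := fresh "Htt" in
  intros t Ht; do 6? (destruct t as [|t]; [rewrite /vx /=; lia|]); exfalso; lia.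

Ltac fc := rewrite ?face_comp; try mono_tac.
Ltac fce := apply: face_ext; ext_tac.

Lemma mono_const m k c : c <= k -> mono m k (fun _ => c).
Proof. by move=> H; split. Qed.

Ltac mono_tac2 :=
  first [ apply: mono_vx; [reflexivity | rewrite /=; lia | rewrite /=; lia]
        | apply: mono_id; lia
        | apply: mono_shift; lia
        | apply: mono_const; lia ].

Ltac feq :=
  rewrite ?face_comp; try mono_tac2;
  first [ apply: face_ext; ext_tac
        | rewrite -[RHS]face_id; apply: face_ext; ext_tac
        | rewrite -[LHS]face_id; apply: face_ext; ext_tac ].

Section Segal.
Variable X : sSet.
Hypothesis HX : two_segal X.

Lemma segal_face N i j d e (HN : 3 <= N) (Hij : i < j) (HjN : j <= N)
  (Hd : d = j - i) (He : e = N - d + 1) (y1 : X d) (y2 : X e) :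
  face 1 (vx [:: 0; d]) y1 = face 1 (vx [:: i; i.+1]) y2 ->
  exists! x : X N, face d (fun t => i + t) x = y1 /\
     face e (fun t => if t <= i then t else t + d - 1) x = y2.
Proof.
subst d e => H; apply: HX => //.
have -> : edge_mid i j = (fun t : 'I_2 => (inord (vx [:: 0; j - i] t) : 'I_(j - i).+1)).
  apply: functional_extensionality => t; case: t => [[|[|t]] Ht] //; by rewrite /edge_mid /vx /= ?mul0n ?mul1n.
have -> : edge_out N i j = (fun t : 'I_2 => (inord (vx [:: i; i.+1] t) : 'I_(N - (j - i) + 1).+1)).
  apply: functional_extensionality => t; case: t => [[|[|t]] Ht] //; by rewrite /edge_out /vx /= ?addn0 ?addn1.
exact: H.
Qed.

Lemma glue_last n (Hn : 1 <= n) (y : X n) (z : X 2) :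
  face 1 (vx [:: 0; n]) y = face 1 (vx [:: 0; 1]) z ->
  exists x : X n.+1, face n (fun t => t) x = y /\ face 2 (vx [:: 0; n; n.+1]) x = z.
Proof.
move=> H.
case: (ltnP 1 n) => Hn2.
- have [x [[H1 H2] _]] := @segal_face n.+1 0 n n 2 ltac:(lia) ltac:(lia) ltac:(lia) ltac:(lia) ltac:(lia) y z H.
  exists x; split.
  + by rewrite -H1; apply: face_ext.
  + rewrite -H2; apply: face_ext; ext_tac.
- have En : n = 1 by lia.
  subst n; exists z; split.
  + rewrite (face_ext (g := vx [:: 0; 1])); [|ext_tac]. rewrite -H -{2}[y]face_id; fce.
  + by rewrite -[RHS]face_id; apply: face_ext; ext_tac.
Qed.

Lemma glue_last_uniq n (Hn : 1 <= n) (x x' : X n.+1) :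
  face n (fun t => t) x = face n (fun t => t) x' ->
  face 2 (vx [:: 0; n; n.+1]) x = face 2 (vx [:: 0; n; n.+1]) x' -> x = x'.
Proof.
move=> H1 H2.
case: (ltnP 1 n) => Hn2.
- pose y := face n (fun t => t) x. pose z := face 2 (vx [:: 0; n; n.+1]) x.
  have Hc : face 1 (vx [:: 0; n]) y = face 1 (vx [:: 0; 1]) z.
    rewrite /y /z !face_comp; try mono_tac. by apply: face_ext; ext_tac.
  have [x0 [_ Hu]] := @segal_face n.+1 0 n n 2 ltac:(lia) ltac:(lia) ltac:(lia) ltac:(lia) ltac:(lia) y z Hc.
  have E : forall w : X n.+1, face n (fun t => t) w = y -> face 2 (vx [:: 0; n; n.+1]) w = z -> x0 = w.
    move=> w Hw1 Hw2; apply: Hu; split.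
    + by rewrite -Hw1; apply: face_ext.
    + rewrite -Hw2; apply: face_ext; ext_tac.
  have <- := E x erefl erefl. apply: E; by rewrite /y /z ?H1 ?H2.
- have En : n = 1 by lia.
  subst n; have Hid : forall w : X 2, face 2 (fun t => t) w = face 2 (vx [:: 0;1;2]) w by move=> w; fce.
  by rewrite -[x]face_id -[x']face_id !Hid.
Qed.

Lemma glue_first n (Hn : 1 <= n) (y : X n) (z : X 2) :
  face 1 (vx [:: 0; n]) y = face 1 (vx [:: 1; 2]) z ->
  exists x : X n.+1, face n (fun t => 1 + t) x = y /\ face 2 (vx [:: 0; 1; n.+1]) x = z.
Proof.
move=> H.
case: (ltnP 1 n) => Hn2.
- have [x [[H1 H2] _]] := @segal_face n.+1 1 n.+1 n 2 ltac:(lia) ltac:(lia) ltac:(lia) ltac:(lia) ltac:(lia) y z H.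
  exists x; split => //.
  rewrite -H2; apply: face_ext; ext_tac.
- have En : n = 1 by lia.
  subst n; exists z; split.
  + rewrite (face_ext (g := vx [:: 1; 2])); [|ext_tac]. rewrite -H -{2}[y]face_id; fce.
  + by rewrite -[RHS]face_id; apply: face_ext; ext_tac.
Qed.

Lemma glue_first_uniq n (Hn : 1 <= n) (x x' : X n.+1) :
  face n (fun t => 1 + t) x = face n (fun t => 1 + t) x' ->
  face 2 (vx [:: 0; 1; n.+1]) x = face 2 (vx [:: 0; 1; n.+1]) x' -> x = x'.
Proof.
move=> H1 H2.
case: (ltnP 1 n) => Hn2.
- pose y := face n (fun t => 1 + t) x. pose z := face 2 (vx [:: 0; 1; n.+1]) x.
  have Hc : face 1 (vx [:: 0; n]) y = face 1 (vx [:: 1; 2]) z.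
    rewrite /y /z !face_comp; try mono_tac. by apply: face_ext; ext_tac.
  have [x0 [_ Hu]] := @segal_face n.+1 1 n.+1 n 2 ltac:(lia) ltac:(lia) ltac:(lia) ltac:(lia) ltac:(lia) y z Hc.
  have E : forall w : X n.+1, face n (fun t => 1 + t) w = y -> face 2 (vx [:: 0; 1; n.+1]) w = z -> x0 = w.
    move=> w Hw1 Hw2; apply: Hu; split => //.
    rewrite -Hw2; apply: face_ext; ext_tac.
  have <- := E x erefl erefl. apply: E; by rewrite /y /z ?H1 ?H2.
- have En : n = 1 by lia.
  subst n; have Hid : forall w : X 2, face 2 (fun t => t) w = face 2 (vx [:: 0;1;2]) w by move=> w; fce.
  by rewrite -[x]face_id -[x']face_id !Hid.
Qed.

End Segal.

Section Cat.
Variable X : sSet.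
Hypothesis HX : two_segal X.
Variable pt : X 0.
Hypothesis Hpt : forall y : X 0, y = pt.

Definition cO : X 1 := face 1 (fun _ => 0) pt.

Lemma face_const n m f (x : X n) c : (forall t, t <= m -> f t = c) -> c <= n ->
  face m f x = face m (fun _ => 0) pt.
Proof.
move=> Hf Hc.
rewrite -(@face_compE _ _ 0 m (fun _ => 0) (fun _ => c) f x); try mono_tac2.
  by rewrite (Hpt (face 0 _ x)).
by move=> t Ht; rewrite Hf.
Qed.

Definition F2 (s : seq nat) (w : X 3) : X 2 := face 2 (vx s) w.

Lemma uniq02 (w w' : X 3) : face 2 (vx [:: 0;1;2]) w = face 2 (vx [:: 0;1;2]) w' ->
  face 2 (vx [:: 0;2;3]) w = face 2 (vx [:: 0;2;3]) w' -> w = w'.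
Proof.
move=> H1 H2; apply: (@glue_last_uniq X HX 2) => //.
have E : forall v : X 3, face 2 (fun t => t) v = face 2 (vx [:: 0;1;2]) v by move=> v; feq.
by rewrite !E.
Qed.

Lemma uniq13 (w w' : X 3) : face 2 (vx [:: 1;2;3]) w = face 2 (vx [:: 1;2;3]) w' ->
  face 2 (vx [:: 0;1;3]) w = face 2 (vx [:: 0;1;3]) w' -> w = w'.
Proof.
move=> H1 H2; apply: (@glue_first_uniq X HX 2) => //.
have E : forall v : X 3, face 2 (fun t => 1 + t) v = face 2 (vx [:: 1;2;3]) v by move=> v; feq.
by rewrite !E.
Qed.

Lemma hglue (f g : X 2) : face 1 (vx [:: 0;2]) f = face 1 (vx [:: 0;1]) g ->
  exists w : X 3, face 2 (vx [:: 0;1;2]) w = f /\ face 2 (vx [:: 0;2;3]) w = g.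
Proof.
move=> H; have [w [H1 H2]] := @glue_last X HX 2 ltac:(lia) f g H.
exists w; split => //; rewrite -H1; feq.
Qed.

Lemma vglue (f g : X 2) : face 1 (vx [:: 1;2]) f = face 1 (vx [:: 0;2]) g ->
  exists w : X 3, face 2 (vx [:: 0;1;3]) w = f /\ face 2 (vx [:: 1;2;3]) w = g.
Proof.
move=> H; have [w [H1 H2]] := @glue_first X HX 2 ltac:(lia) g f (esym H).
exists w; split => //; rewrite -H1; feq.
Qed.

Lemma inh3 : inhabited (X 3).
Proof. exact: (inhabits (face 3 (fun _ => 0) pt)). Qed.

Definition hsrc' (f : X 2) : X 1 := face 1 (vx [:: 0;1]) f.
Definition htgt' (f : X 2) : X 1 := face 1 (vx [:: 0;2]) f.
Definition hid' (a : X 1) : X 2 := face 2 (vx [:: 0;1;1]) a.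
Definition hcomp' (f g : X 2) : X 2 := face 2 (vx [:: 0;1;3])
  (epsilon inh3 (fun w => face 2 (vx [:: 0;1;2]) w = f /\ face 2 (vx [:: 0;2;3]) w = g)).
Definition vsrc' (f : X 2) : X 1 := face 1 (vx [:: 0;2]) f.
Definition vtgt' (f : X 2) : X 1 := face 1 (vx [:: 1;2]) f.
Definition vid' (a : X 1) : X 2 := face 2 (vx [:: 0;0;1]) a.
Definition vcomp' (f g : X 2) : X 2 := face 2 (vx [:: 0;2;3])
  (epsilon inh3 (fun w => face 2 (vx [:: 0;1;3]) w = f /\ face 2 (vx [:: 1;2;3]) w = g)).
Definition Sq' (t b l r : X 2) : Prop := exists w : X 3,
  [/\ face 2 (vx [:: 0;2;3]) w = t, face 2 (vx [:: 1;2;3]) w = b,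
      face 2 (vx [:: 0;1;2]) w = l & face 2 (vx [:: 0;1;3]) w = r].

Lemma hcomp_spec f g (w : X 3) : face 2 (vx [:: 0;1;2]) w = f -> face 2 (vx [:: 0;2;3]) w = g ->
  hcomp' f g = face 2 (vx [:: 0;1;3]) w.
Proof.
move=> H1 H2; rewrite /hcomp'.
set P := (fun w => _).
have [] : P (epsilon inh3 P) by apply: epsilon_spec; exists w.
rewrite -H1 -H2 => E1 E2; by rewrite (uniq02 E1 E2).
Qed.

Lemma vcomp_spec f g (w : X 3) : face 2 (vx [:: 0;1;3]) w = f -> face 2 (vx [:: 1;2;3]) w = g ->
  vcomp' f g = face 2 (vx [:: 0;2;3]) w.
Proof.
move=> H1 H2; rewrite /vcomp'.
set P := (fun w => _).
have [] : P (epsilon inh3 P) by apply: epsilon_spec; exists w.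
rewrite -H1 -H2 => E1 E2; by rewrite (uniq13 E2 E1).
Qed.


Lemma hc_face n (u : X n) a b c d : a <= b -> b <= c -> c <= d -> d <= n ->
  hcomp' (face 2 (vx [:: a; b; c]) u) (face 2 (vx [:: a; c; d]) u) = face 2 (vx [:: a; b; d]) u.
Proof.
move=> *; rewrite (@hcomp_spec _ _ (face 3 (vx [:: a; b; c; d]) u)); feq.
Qed.

Lemma vc_face n (u : X n) a b c d : a <= b -> b <= c -> c <= d -> d <= n ->
  vcomp' (face 2 (vx [:: a; b; d]) u) (face 2 (vx [:: b; c; d]) u) = face 2 (vx [:: a; c; d]) u.
Proof.
move=> *; rewrite (@vcomp_spec _ _ (face 3 (vx [:: a; b; c; d]) u)); feq.
Qed.

Ltac ff := rewrite /hsrc' /htgt' /hid' /vsrc' /vtgt' /vid'; feq.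

Lemma hid_src' a : hsrc' (hid' a) = a. Proof. ff. Qed.
Lemma hid_tgt' a : htgt' (hid' a) = a. Proof. ff. Qed.
Lemma vid_src' a : vsrc' (vid' a) = a. Proof. ff. Qed.
Lemma vid_tgt' a : vtgt' (vid' a) = a. Proof. ff. Qed.

Lemma hcomp_src' f g : htgt' f = hsrc' g -> hsrc' (hcomp' f g) = hsrc' f.
Proof.
move=> H; have [w [H1 H2]] := hglue H.
rewrite (hcomp_spec H1 H2) -H1; ff.
Qed.
Lemma hcomp_tgt' f g : htgt' f = hsrc' g -> htgt' (hcomp' f g) = htgt' g.
Proof.
move=> H; have [w [H1 H2]] := hglue H.
rewrite (hcomp_spec H1 H2) -H2; ff.
Qed.
Lemma vcomp_src' f g : vtgt' f = vsrc' g -> vsrc' (vcomp' f g) = vsrc' f.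
Proof.
move=> H; have [w [H1 H2]] := vglue H.
rewrite (vcomp_spec H1 H2) -H1; ff.
Qed.
Lemma vcomp_tgt' f g : vtgt' f = vsrc' g -> vtgt' (vcomp' f g) = vtgt' g.
Proof.
move=> H; have [w [H1 H2]] := vglue H.
rewrite (vcomp_spec H1 H2) -H2; ff.
Qed.

Lemma hcomp_idl' f : hcomp' (hid' (hsrc' f)) f = f.
Proof.
rewrite (@hcomp_spec _ _ (face 3 (vx [:: 0;1;1;2]) f)); ff.
Qed.
Lemma hcomp_idr' f : hcomp' f (hid' (htgt' f)) = f.
Proof.
rewrite (@hcomp_spec _ _ (face 3 (vx [:: 0;1;2;2]) f)); ff.
Qed.
Lemma vcomp_idl' f : vcomp' (vid' (vsrc' f)) f = f.
Proof.
rewrite (@vcomp_spec _ _ (face 3 (vx [:: 0;0;1;2]) f)); ff.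
Qed.
Lemma vcomp_idr' f : vcomp' f (vid' (vtgt' f)) = f.
Proof.
rewrite (@vcomp_spec _ _ (face 3 (vx [:: 0;1;1;2]) f)); ff.
Qed.

Lemma hcomp_assoc' f g h : htgt' f = hsrc' g -> htgt' g = hsrc' h ->
  hcomp' (hcomp' f g) h = hcomp' f (hcomp' g h).
Proof.
move=> H1 H2.
have [w [Hw1 Hw2]] := hglue H1.
have Hc : face 1 (vx [:: 0;3]) w = face 1 (vx [:: 0;1]) h by rewrite -[face 1 (vx [:: 0;1]) h]/(hsrc' h) -H2 -Hw2; ff.
have [u [Hu1 Hu2]] := @glue_last X HX 3 ltac:(lia) w h Hc.
have Ef : f = face 2 (vx [:: 0;1;2]) u by rewrite -Hw1 -Hu1; feq.
have Eg : g = face 2 (vx [:: 0;2;3]) u by rewrite -Hw2 -Hu1; feq.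
rewrite Ef Eg -Hu2.
by rewrite !hc_face.
Qed.

Lemma vcomp_assoc' f g h : vtgt' f = vsrc' g -> vtgt' g = vsrc' h ->
  vcomp' (vcomp' f g) h = vcomp' f (vcomp' g h).
Proof.
move=> H1 H2.
have [w [Hw1 Hw2]] := vglue H2.
have Hc : face 1 (vx [:: 0;3]) w = face 1 (vx [:: 1;2]) f by rewrite -[face 1 (vx [:: 1;2]) f]/(vtgt' f) H1 -Hw1; ff.
have [u [Hu1 Hu2]] := @glue_first X HX 3 ltac:(lia) w f Hc.
have Eg : g = face 2 (vx [:: 1;2;4]) u by rewrite -Hw1 -Hu1; feq.
have Eh : h = face 2 (vx [:: 2;3;4]) u by rewrite -Hw2 -Hu1; feq.
rewrite Eg Eh -Hu2.
by rewrite !vc_face.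
Qed.

Lemma Sq_boundary' t b l r : Sq' t b l r ->
  [/\ hsrc' t = vsrc' l, htgt' t = vsrc' r, hsrc' b = vtgt' l & htgt' b = vtgt' r].
Proof. case=> w [<- <- <- <-]; split; ff. Qed.

Lemma Sq_hid' v : Sq' (hid' (vsrc' v)) (hid' (vtgt' v)) v v.
Proof. exists (face 3 (vx [:: 0;1;2;2]) v); split; ff. Qed.

Lemma Sq_vid' f : Sq' f f (vid' (hsrc' f)) (vid' (htgt' f)).
Proof. exists (face 3 (vx [:: 0;0;1;2]) f); split; ff. Qed.

Lemma Sq_hcomp' t b l r t' b' r' : Sq' t b l r -> Sq' t' b' r r' ->
  Sq' (hcomp' t t') (hcomp' b b') l r'.
Proof.
case=> w [Ht Hb Hl Hr]; case=> w' [Ht' Hb' Hr1 Hr'].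
have Hc : face 1 (vx [:: 0;3]) w = face 1 (vx [:: 0;1]) t'.
  have -> : face 1 (vx [:: 0;3]) w = face 1 (vx [:: 0;2]) (face 2 (vx [:: 0;1;3]) w) by feq.
  rewrite Hr -Hr1 -Ht'; feq.
have [u [Hu1 Hu2]] := @glue_last X HX 3 ltac:(lia) w t' Hc.
have Ew' : w' = face 3 (vx [:: 0;1;3;4]) u.
  apply: uniq02.
  - rewrite Hr1 -Hr -Hu1; feq.
  - rewrite Ht' -Hu2; feq.
subst w'.
have Et : t = face 2 (vx [:: 0;2;3]) u by rewrite -Ht -Hu1; feq.
have Eb : b = face 2 (vx [:: 1;2;3]) u by rewrite -Hb -Hu1; feq.
have El : l = face 2 (vx [:: 0;1;2]) u by rewrite -Hl -Hu1; feq.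
have Et' : t' = face 2 (vx [:: 0;3;4]) u by rewrite -Ht'; feq.
have Eb' : b' = face 2 (vx [:: 1;3;4]) u by rewrite -Hb'; feq.
have Er' : r' = face 2 (vx [:: 0;1;4]) u by rewrite -Hr'; feq.
rewrite Et Eb El Et' Eb' Er'.
rewrite !hc_face //.
exists (face 3 (vx [:: 0;1;2;4]) u); split; feq.
Qed.

Lemma Sq_vcomp' t m b l r l' r' : Sq' t m l r -> Sq' m b l' r' ->
  Sq' t b (vcomp' l l') (vcomp' r r').
Proof.
case=> w [Ht Hm Hl Hr]; case=> w' [Hm' Hb Hl' Hr'].
have Hc : face 1 (vx [:: 0;3]) w' = face 1 (vx [:: 1;2]) r.
  have -> : face 1 (vx [:: 0;3]) w' = face 1 (vx [:: 0;2]) (face 2 (vx [:: 0;2;3]) w') by feq.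
  rewrite Hm' -Hm -Hr; feq.
have [u [Hu1 Hu2]] := @glue_first X HX 3 ltac:(lia) w' r Hc.
have Ew : w = face 3 (vx [:: 0;1;3;4]) u.
  apply: uniq13.
  - rewrite Hm -Hm' -Hu1; feq.
  - rewrite Hr -Hu2; feq.
subst w.
have Et : t = face 2 (vx [:: 0;3;4]) u by rewrite -Ht; feq.
have El : l = face 2 (vx [:: 0;1;3]) u by rewrite -Hl; feq.
have Er : r = face 2 (vx [:: 0;1;4]) u by rewrite -Hr; feq.
have Eb : b = face 2 (vx [:: 2;3;4]) u by rewrite -Hb -Hu1; feq.
have El' : l' = face 2 (vx [:: 1;2;3]) u by rewrite -Hl' -Hu1; feq.
have Er' : r' = face 2 (vx [:: 1;2;4]) u by rewrite -Hr' -Hu1; feq.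
rewrite Et El Er Eb El' Er'.
rewrite !vc_face //.
exists (face 3 (vx [:: 0;2;3;4]) u); split; feq.
Qed.

Lemma cO_eq (a : X 1) : face 1 (vx [:: 0; 0]) a = cO.
Proof. rewrite /cO; apply: (@face_const _ _ _ _ 0) => //; ext_tac. Qed.

Lemma hor_from_O g : face 1 (vx [:: 0;1]) g = cO -> g = face 2 (vx [:: 0;0;2]) g.
Proof.
move=> H.
have E : face 3 (vx [:: 0;0;1;2]) g = face 3 (vx [:: 0;1;1;2]) g.
  apply: uniq02; last by feq.
  have -> : face 2 (vx [:: 0;1;2]) (face 3 (vx [:: 0;0;1;2]) g) = face 2 (vx [:: 0;0;1]) (face 1 (vx [:: 0;1]) g) by feq.
  have -> : face 2 (vx [:: 0;1;2]) (face 3 (vx [:: 0;1;1;2]) g) = face 2 (vx [:: 0;1;1]) (face 1 (vx [:: 0;1]) g) by feq.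
  rewrite H /cO !face_comp; try mono_tac2.
  apply: face_ext; ext_tac.
have E2 := congr1 (face 2 (vx [:: 0;1;3])) E.
rewrite !face_comp in E2; try mono_tac2.
rewrite -[LHS]face_id.
rewrite (face_ext (g := fun t => vx [:: 0;1;1;2] (vx [:: 0;1;3] t))); last ext_tac.
rewrite -E2; feq.
Qed.

Lemma ver_to_O v : face 1 (vx [:: 1;2]) v = cO -> v = face 2 (vx [:: 0;2;2]) v.
Proof.
move=> H.
have E : face 3 (vx [:: 0;1;2;2]) v = face 3 (vx [:: 0;1;1;2]) v.
  apply: uniq13; last by feq.
  have -> : face 2 (vx [:: 1;2;3]) (face 3 (vx [:: 0;1;2;2]) v) = face 2 (vx [:: 0;1;1]) (face 1 (vx [:: 1;2]) v) by feq.
  have -> : face 2 (vx [:: 1;2;3]) (face 3 (vx [:: 0;1;1;2]) v) = face 2 (vx [:: 0;0;1]) (face 1 (vx [:: 1;2]) v) by feq.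
  rewrite H /cO !face_comp; try mono_tac2.
  apply: face_ext; ext_tac.
have E2 := congr1 (face 2 (vx [:: 0;2;3])) E.
rewrite !face_comp in E2; try mono_tac2.
rewrite -[LHS]face_id.
rewrite (face_ext (g := fun t => vx [:: 0;1;1;2] (vx [:: 0;2;3] t))); last ext_tac.
rewrite -E2; feq.
Qed.

Lemma O_hinitial' a : exists f, [/\ hsrc' f = cO, htgt' f = a &
      forall g, hsrc' g = cO -> htgt' g = a -> g = f].
Proof.
exists (face 2 (vx [:: 0;0;1]) a); split.
- rewrite /hsrc' /cO face_comp; try mono_tac2.
  apply: (@face_const _ _ _ _ 0) => //; ext_tac.
- ff.
- move=> g H1 H2; rewrite (hor_from_O H1) -H2 /htgt'; feq.
Qed.

Lemma O_vterminal' a : exists v, [/\ vsrc' v = a, vtgt' v = cO &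
      forall w, vsrc' w = a -> vtgt' w = cO -> w = v].
Proof.
exists (face 2 (vx [:: 0;1;1]) a); split.
- ff.
- rewrite /vtgt' /cO face_comp; try mono_tac2.
  apply: (@face_const _ _ _ _ 1) => //; ext_tac.
- move=> w H1 H2; rewrite (ver_to_O H2) -H1 /vsrc'; feq.
Qed.

Definition Ccat : squares_category :=
  @SquaresCat (X 1) (X 2) hsrc' htgt' hid' hcomp' (X 2) vsrc' vtgt' vid' vcomp' Sq' cO
    hid_src' hid_tgt' hcomp_src' hcomp_tgt' hcomp_idl' hcomp_idr' hcomp_assoc'
    vid_src' vid_tgt' vcomp_src' vcomp_tgt' vcomp_idl' vcomp_idr' vcomp_assoc'
    Sq_boundary' Sq_hid' Sq_vid' Sq_hcomp' Sq_vcomp' O_hinitial' O_vterminal'.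

End Cat.

Section Main.
Variable X : sSet.
Hypothesis HX : two_segal X.
Variable pt : X 0.
Hypothesis Hpt : forall y : X 0, y = pt.

Let C := Ccat HX Hpt.

Definition phi (n : nat) (x : X n) : SqRaw C :=
  @MkSqRaw C
    (fun j k => if (j < k) && (k <= n) then face 1 (vx [:: j; k]) x else cO pt)
    (fun j k => if (j <= k) && (k < n) then face 2 (vx [:: j; k; k.+1]) x else hid' (cO pt))
    (fun j k => if (j < k) && (k <= n) then face 2 (vx [:: j; j.+1; k]) x else vid' (cO pt)).
Arguments phi : clear implicits.

Lemma sobj_phi n (x : X n) j k : sobj (phi n x) j k =
  if (j < k) && (k <= n) then face 1 (vx [:: j; k]) x else cO pt.
Proof. by []. Qed.
Lemma shor_phi n (x : X n) j k : shor (phi n x) j k =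
  if (j <= k) && (k < n) then face 2 (vx [:: j; k; k.+1]) x else hid' (cO pt).
Proof. by []. Qed.
Lemma sver_phi n (x : X n) j k : sver (phi n x) j k =
  if (j < k) && (k <= n) then face 2 (vx [:: j; j.+1; k]) x else vid' (cO pt).
Proof. by []. Qed.
Arguments phi : simpl never.

Lemma edge_phi n (x : X n) a b : a <= b -> b <= n -> sobj (phi n x) a b = face 1 (vx [:: a; b]) x.
Proof.
move=> Hab Hbn; rewrite sobj_phi.
case: ifP => // /negbT H.
have E : a = b by lia.
subst b; rewrite /cO; symmetry; apply: (@face_const _ _ Hpt _ _ _ _ a) => //; ext_tac.
Qed.

Lemma phi_valid n (x : X n) : sq_valid n (phi n x).
Proof.
split.
- split.
  + by move=> j k H; rewrite sobj_phi (negbTE H).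
  + move=> j k /andP [H1 H2]; rewrite shor_phi H1 H2 !edge_phi; try lia; rewrite /= /hsrc' /htgt'; split; feq.
- by move=> j k H; rewrite shor_phi (negbTE H).
- move=> j k /andP [H1 H2]; rewrite sver_phi H1 H2 !edge_phi; try lia; rewrite /= /vsrc' /vtgt'; split; feq.
- by move=> j k H; rewrite sver_phi (negbTE H).
- move=> j k /andP [H1 H2]; rewrite !shor_phi !sver_phi.
  repeat (case: ifP => [_|/negP ?]; last (exfalso; lia)).
  exists (face 3 (vx [:: j; j.+1; k; k.+1]) x); split; feq.
Qed.

Lemma HP n (x : X n) a b d : a <= b -> b + d <= n ->
  hpath (shor (phi n x) a) (sobj (phi n x) a b) b d = face 2 (vx [:: a; b; b + d]) x.
Proof.
move=> Hab Hd0; rewrite edge_phi; try lia.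
elim: d Hd0 => [|d IH] Hd /=.
- rewrite addn0 /hid'; feq.
- rewrite IH; last lia.
  have -> : (a <= b + d) && (b + d < n) by apply/andP; split; lia.
  rewrite (hc_face HX); try lia. by rewrite addnS.
Qed.

Lemma VP n (x : X n) a c d : a + d <= c -> c <= n ->
  vpath (fun t => sver (phi n x) t c) (sobj (phi n x) a c) a d = face 2 (vx [:: a; a + d; c]) x.
Proof.
move=> Hd0 Hc; rewrite edge_phi; try lia.
elim: d Hd0 => [|d IH] Hd /=.
- rewrite addn0 /vid'; feq.
- rewrite IH; last lia.
  have -> : (a + d < c) && (c <= n) by apply/andP; split; lia.
  rewrite (vc_face HX); try lia. by rewrite addnS.
Qed.

Lemma sact_face m n (theta : 'I_m.+1 -> 'I_n.+1) (x : X n) :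
  sact X theta x = face m (ord_fun theta) x.
Proof.
rewrite /face /ord_fun; congr (sact X _ x); apply: functional_extensionality => t.
by rewrite !inord_val.
Qed.

Lemma mono_ord_fun m n (theta : 'I_m.+1 -> 'I_n.+1) : monotone theta -> mono m n (ord_fun theta).
Proof.
move=> Hm; split; last by rewrite /ord_fun -ltnS.
move=> s t Hst Htm; rewrite /ord_fun; apply: Hm.
rewrite !inordK //; lia.
Qed.

Lemma phi_nat m n (theta : 'I_m.+1 -> 'I_n.+1) : monotone theta ->
  forall x : X n, phi m (sact X theta x) = sq_act (ord_fun theta) m (phi n x).
Proof.
move=> Hth x; rewrite sact_face.
have HT := mono_ord_fun Hth.
set T := ord_fun theta in HT *.
have Tm : forall s t, s <= t -> t <= m -> T s <= T t by case: HT.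
have Tn : forall t, T t <= n by move=> t; rewrite /T /ord_fun -ltnS.
rewrite {1}/phi /sq_act; congr MkSqRaw.
- apply: functional_extensionality => j; apply: functional_extensionality => k.
  case: ifP => // /andP [H1 H2].
  have := Tm j k ltac:(lia) H2 => HT2.
  rewrite edge_phi //. rewrite face_comp //; last mono_tac2. feq.
- apply: functional_extensionality => j; apply: functional_extensionality => k.
  case: ifP => // /andP [H1 H2].
  have := Tm j k H1 ltac:(lia) => HT1.
  have := Tm k k.+1 ltac:(lia) ltac:(lia) => HT2.
  rewrite HP //; last by rewrite subnKC.
  rewrite subnKC //. rewrite face_comp //; last mono_tac2. feq.
- apply: functional_extensionality => j; apply: functional_extensionality => k.
  case: ifP => // /andP [H1 H2].
  have := Tm j j.+1 ltac:(lia) ltac:(lia) => HT1.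
  have := Tm j.+1 k H1 H2 => HT2.
  rewrite VP //; last by rewrite subnKC.
  rewrite subnKC //. rewrite face_comp //; last mono_tac2. feq.
Qed.


Definition incl (n : nat) : 'I_n.+1 -> 'I_n.+2 := fun t => inord t.
Arguments incl : clear implicits.

Lemma incl_mono n : monotone (incl n).
Proof. move=> i j H; rewrite /incl !inordK //; apply: leq_trans (ltn_ord _) _; done. Qed.

Lemma ord_fun_incl n t : t <= n -> ord_fun (incl n) t = t.
Proof. move=> H; rewrite /ord_fun /incl !inordK //; lia. Qed.

Lemma phi_inj n : injective (phi n).
Proof.
elim: n => [|n IH] x x' E.
- by rewrite (Hpt x) (Hpt x').
- case: n IH x x' E => [|n] IH x x' E.
  + have := congr1 (fun A => sobj A 0 1) E; rewrite !sobj_phi /= => E1.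
    have F : forall y : X 1, y = face 1 (vx [:: 0; 1]) y by move=> y; feq.
    by rewrite (F x) (F x').
  + apply: (@glue_last_uniq X HX n.+1) => //.
    * have E1 := congr1 (sq_act (ord_fun (incl n.+1)) n.+1) E.
      rewrite -!phi_nat in E1; try exact: incl_mono.
      have E2 := IH _ _ E1.
      rewrite !sact_face in E2.
      have G : forall y : X n.+2, face n.+1 (ord_fun (incl n.+1)) y = face n.+1 (fun t => t) y.
        by move=> y; apply: face_ext => t Ht; rewrite ord_fun_incl.
      by rewrite -!G.
    * have := congr1 (fun A => shor A 0 n.+1) E; by rewrite !shor_phi /= ltnSn.
Qed.

Definition restr n (A : SqRaw C) : SqRaw C :=
  @MkSqRaw C
    (fun j k => if (j < k) && (k <= n) then sobj A j k else cO pt)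
    (fun j k => if (j <= k) && (k < n) then shor A j k else hid' (cO pt))
    (fun j k => if (j < k) && (k <= n) then sver A j k else vid' (cO pt)).

Lemma restr_sobj n A j k : sq_valid n.+1 A -> k <= n -> sobj (restr n A) j k = sobj A j k.
Proof.
case=> [[H1 _] _ _ _ _] Hk; rewrite /=.
case: ifP => // /negbT H; rewrite H1 //; apply/negP => /andP [Ha Hb].
move/negP: H; apply; apply/andP; split => //.
Qed.

Lemma restr_valid n A : sq_valid n.+1 A -> sq_valid n (restr n A).
Proof.
move=> HA; have HA' := HA; case: HA' => [[H1 H2] H3 H4 H5 H6]; split.
- split.
  + by move=> j k H; rewrite /= (negbTE H).
  + move=> j k /andP [Ha Hb].
    rewrite !restr_sobj //; try lia.
    rewrite /=; case: ifP => [_|/negP ?]; last (exfalso; lia).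
    apply: H2; apply/andP; split; lia.
- by move=> j k H; rewrite /= (negbTE H).
- move=> j k /andP [Ha Hb].
  rewrite !restr_sobj //; try lia.
  rewrite /=; case: ifP => [_|/negP ?]; last (exfalso; lia).
  apply: H4; apply/andP; split; lia.
- by move=> j k H; rewrite /= (negbTE H).
- move=> j k /andP [Ha Hb]; rewrite /=.
  repeat (case: ifP => [_|/negP ?]; last (exfalso; lia)).
  apply: H6; apply/andP; split; lia.
Qed.

Lemma valid_eq n (A B : SqRaw C) : sq_valid n A -> sq_valid n B ->
  (forall j k, j < k -> k <= n -> sobj A j k = sobj B j k) ->
  (forall j k, j <= k -> k < n -> shor A j k = shor B j k) ->
  (forall j k, j < k -> k <= n -> sver A j k = sver B j k) -> A = B.
Proof.
case=> [[A1 _] A2 _ A4 _]; case=> [[B1 _] B2 _ B4 _] E1 E2 E3.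
case: A A1 A2 A4 E1 E2 E3 => oA hA vA; case: B B1 B2 B4 => oB hB vB /= B1 B2 B4 A1 A2 A4 E1 E2 E3.
congr MkSqRaw; apply: functional_extensionality => j; apply: functional_extensionality => k.
- case: (boolP ((j < k) && (k <= n))) => [/andP [Ha Hb]|H]; first exact: E1.
  by rewrite A1 ?B1.
- case: (boolP ((j <= k) && (k < n))) => [/andP [Ha Hb]|H]; first exact: E2.
  by rewrite A2 ?B2.
- case: (boolP ((j < k) && (k <= n))) => [/andP [Ha Hb]|H]; first exact: E3.
  by rewrite A4 ?B4.
Qed.


Lemma recon n (A : SqRaw C) : sq_valid n A -> exists x : X n, phi n x = A.
Proof.
elim: n A => [|n IH] A HA.
  exists pt; apply: (valid_eq (phi_valid pt) HA) => j k *; exfalso; lia.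
have HA' := HA; case: HA' => [[V1 V2] V3 V4 V5 V6].
case: n IH A HA V1 V2 V3 V4 V5 V6 => [|n] IH A HA V1 V2 V3 V4 V5 V6.
- exists (sobj A 0 1 : X 1).
  apply: (valid_eq (phi_valid _) HA).
  + move=> j k Hjk Hk; have [-> ->] : j = 0 /\ k = 1 by lia.
    rewrite sobj_phi /=; feq.
  + move=> j k Hjk Hk; have [-> ->] : j = 0 /\ k = 0 by lia.
    rewrite shor_phi /=.
    have [Hs Ht] := V2 0 0 erefl.
    rewrite V1 // in Hs.
    rewrite [RHS](hor_from_O HX Hs).
    rewrite -Ht /= /htgt'; feq.
  + move=> j k Hjk Hk; have [-> ->] : j = 0 /\ k = 1 by lia.
    rewrite sver_phi /=.
    have [Hs Ht] := V4 0 1 erefl.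
    rewrite V1 // in Ht.
    rewrite [RHS](ver_to_O HX Ht).
    rewrite -Hs /= /vsrc'; feq.
- have [y Hy] := IH _ (restr_valid HA).
  have Hc : face 1 (vx [:: 0; n.+1]) y = face 1 (vx [:: 0; 1]) (shor A 0 n.+1).
    rewrite -edge_phi // Hy restr_sobj //.
    have [Hs _] := V2 0 n.+1 ltac:(apply/andP; split; lia).
    by rewrite -Hs.
  have [x [Hx1 Hx2]] := @glue_last X HX n.+1 ltac:(lia) y _ Hc.
  have Fy : forall m f, mono m n.+1 f -> face m f x = face m f y.
    move=> m f Hf; rewrite -Hx1 face_comp //; try exact: mono_id.
  have Lo : forall j k, j < k -> k <= n.+1 -> face 1 (vx [:: j; k]) x = sobj A j k.
    move=> j k H1 H2; rewrite Fy; last mono_tac2.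
    have := congr1 (fun B => sobj B j k) Hy; rewrite sobj_phi /=.
    by case: ifP => [_ ->|/negP ?]; last (exfalso; lia).
  have Lh : forall j k, j <= k -> k < n.+1 -> face 2 (vx [:: j; k; k.+1]) x = shor A j k.
    move=> j k H1 H2; rewrite Fy; last mono_tac2.
    have := congr1 (fun B => shor B j k) Hy; rewrite shor_phi /=.
    by case: ifP => [_ ->|/negP ?]; last (exfalso; lia).
  have Lv : forall j k, j < k -> k <= n.+1 -> face 2 (vx [:: j; j.+1; k]) x = sver A j k.
    move=> j k H1 H2; rewrite Fy; last mono_tac2.
    have := congr1 (fun B => sver B j k) Hy; rewrite sver_phi /=.
    by case: ifP => [_ ->|/negP ?]; last (exfalso; lia).
  have cell : forall j, j < n.+1 -> face 2 (vx [:: j; n.+1; n.+2]) x = shor A j n.+1 ->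
      face 2 (vx [:: j.+1; n.+1; n.+2]) x = shor A j.+1 n.+1 /\
      face 2 (vx [:: j; j.+1; n.+2]) x = sver A j n.+2.
    move=> j Hj Hsh.
    have [w [Ht Hb Hl Hr]] := V6 j n.+1 ltac:(apply/andP; split; lia).
    have Ew : w = face 3 (vx [:: j; j.+1; n.+1; n.+2]) x.
      apply: (uniq02 HX).
      - rewrite Hl -Lv //; feq.
      - rewrite Ht -Hsh; feq.
    subst w; rewrite -Hb -Hr; split; feq.
  have Hsh : forall j, j <= n.+1 -> face 2 (vx [:: j; n.+1; n.+2]) x = shor A j n.+1.
    elim=> [|j IHj] Hj; first exact: Hx2.
    exact: (cell j Hj (IHj (ltnW Hj))).1.
  have Hsv : forall j, j < n.+1 -> face 2 (vx [:: j; j.+1; n.+2]) x = sver A j n.+2.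
    move=> j Hj; exact: (cell j Hj (Hsh j (ltnW Hj))).2.
  have Lo2 : forall j, j < n.+2 -> face 1 (vx [:: j; n.+2]) x = sobj A j n.+2.
    move=> j Hj.
    have [_ Ht] := V2 j n.+1 ltac:(apply/andP; split; lia).
    rewrite -Ht -Hsh; last lia.
    rewrite /= /htgt'; feq.
  exists x; apply: (valid_eq (phi_valid _) HA).
  + move=> j k Hjk Hk; rewrite sobj_phi.
    case: ifP => [_|/negP ?]; last (exfalso; lia).
    case: (ltnP k n.+2) => Hk2; first exact: Lo.
    have -> : k = n.+2 by lia.
    apply: Lo2; lia.
  + move=> j k Hjk Hk; rewrite shor_phi.
    case: ifP => [_|/negP ?]; last (exfalso; lia).
    case: (ltnP k n.+1) => Hk2; first exact: Lh.
    have -> : k = n.+1 by lia.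
    apply: Hsh; lia.
  + move=> j k Hjk Hk; rewrite sver_phi.
    case: ifP => [_|/negP ?]; last (exfalso; lia).
    case: (ltnP k n.+2) => Hk2; first exact: Lv.
    have -> : k = n.+2 by lia.
    case: (ltnP j n.+1) => Hj2; first exact: Hsv.
    have -> : j = n.+1 by lia.
    have [Hs Ht] := V4 n.+1 n.+2 ltac:(apply/andP; split; lia).
    rewrite V1 ?ltnn // in Ht.
    have E : face 2 (vx [:: 0;2;2]) (sver A n.+1 n.+2) = face 2 (vx [:: 0;1;1]) (vsrc' (sver A n.+1 n.+2)) by rewrite /vsrc'; feq.
    change (vsrc' (sver A n.+1 n.+2) = sobj A n.+1 n.+2) in Hs.
    rewrite [RHS](ver_to_O HX Ht) E Hs -Lo2; [feq | lia].
Qed.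

End Main.

Theorem corollary3p7 (X : sSet) :
  two_segal X -> reduced X -> exists C : squares_category, iso_to_SqCat X C.
Proof.
move=> HX [pt Hpt]; exists (Ccat HX Hpt).
exists (fun n => @phi _ HX _ Hpt n); split.
- move=> n; exact: phi_inj.
- move=> n A; split; first exact: recon.
  by case=> x <-; exact: phi_valid.
- move=> m n theta Hth x; exact: phi_nat.
Qed.
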